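(* For cake instances, Generalized PAV does not satisfy cake EJR: there exists a cake instance and an allocation selected by Generalized PAV that violates cake EJR.
   Context: Model: There is a set of agents $N=\{1,\dots,n\}$. The resource $R$ consists of a cake $C=[0,c]$ for a real $c\ge 0$ and a set of indivisible goods $G=\{g_1,\dots,g_m\}$ for an integer $m\ge 0$, with $\max(c,m)>0$. A piece of cake is a union of finitely many disjoint closed subintervals of $C$; its length $\ell(\cdot)$ is the sum of the lengths of its intervals. A bundle $R'=(C',G')$ consists of a piece of cake $C'\subseteq C$ and a set $G'\subseteq G$; its size is $s(R')=\ell(C')+|G'|$. Each agent $i$ approves a bundle $R_i=(C_i,G_i)$, and her utility for a bundle $R'$ is $u_i(R')=\ell(C_i\cap C')+|G_i\cap G'|$. A parameter $\alpha\in(0,c+m]$ is given; an allocation is a bundle $A$ with $s(A)\le\alpha$. A cake instance is one with $m=0$. For a real $t>0$, $N^*\subseteq N$ is $t$-cohesive if $|N^*|\ge t n/\alpha$ and $s(\bigcap_{i\in N^*}R_i)\ge t$. Cake EJR: an allocation $A$ satisfies cake EJR if for every real $t>0$ and every $t$-cohesive group $N^*$, some $j\in N^*$ has $u_j(A)\ge t$. Generalized harmonic numbers: $H_x\coloneqq\sum_{k=1}^\infty\frac{x}{k(x+k)}$ for real $x\ge0$. Generalized PAV selects an allocation $R'$ with $s(R')\le\alpha$ maximizing $\sum_{i\in N}H_{u_i(R')}$. *)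

(* Defs.v *)
From HB Require Import structures.
From mathcomp Require Import all_boot all_order all_algebra.
From mathcomp Require Import all_classical all_reals all_analysis.
From mathcomp Require Import Rstruct Rstruct_topology.
Set Implicit Arguments. Unset Strict Implicit. Unset Printing Implicit Defensive.
Import Order.TTheory GRing.Theory Num.Theory.
Local Open Scope classical_set_scope.
Local Open Scope ring_scope.

Notation R := Rdefinitions.R.

Definition closed_itv (p : R * R) : set R := [set x | p.1 <= x <= p.2].

Definition is_piece (c : R) (S : set R) : Prop :=
  exists s : seq (R * R),
    (forall p, p \in s -> 0 <= p.1 /\ p.1 <= p.2 /\ p.2 <= c) /\
    (forall i j, (i < j < size s)%N ->
        closed_itv (nth (0, 0) s i) `&` closed_itv (nth (0, 0) s j) = set0) /\
    S = [set x | exists2 p, p \in s & closed_itv p x].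

Definition len (S : set R) : R := fine (lebesgue_measure S).

Definition genH (x : R) : R :=
  \big[+%R/0%R]_(1 <= k <oo) (x / (k%:R * (x + k%:R))).

Definition cake_instance (n : nat) (c alpha : R) (Rp : 'I_n -> set R) : Prop :=
  (0 < n)%N /\ 0 < c /\ 0 < alpha <= c /\ (forall i, is_piece c (Rp i)).

Definition util n (Rp : 'I_n -> set R) (i : 'I_n) (A : set R) : R :=
  len (Rp i `&` A).

Definition allocation (c alpha : R) (A : set R) : Prop :=
  is_piece c A /\ len A <= alpha.

Definition gen_PAV_selects n (c alpha : R) (Rp : 'I_n -> set R) (A : set R)
  : Prop :=
  allocation c alpha A /\
  forall B, allocation c alpha B ->
    \sum_(i < n) genH (util Rp i B) <= \sum_(i < n) genH (util Rp i A).

Definition group_inter n (Rp : 'I_n -> set R) (Ns : {set 'I_n}) : set R :=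
  [set x | forall i, i \in Ns -> Rp i x].

Definition cohesive n (alpha : R) (Rp : 'I_n -> set R) (t : R)
  (Ns : {set 'I_n}) : Prop :=
  t * n%:R / alpha <= #|Ns|%:R /\ t <= len (group_inter Rp Ns).

Definition cake_EJR n (alpha : R) (Rp : 'I_n -> set R) (A : set R) : Prop :=
  forall (t : R) (Ns : {set 'I_n}), 0 < t -> cohesive alpha Rp t Ns ->
    exists2 j, j \in Ns & t <= util Rp j A.

(* Main.v *)
Require Import Defs.
From HB Require Import structures.
From mathcomp Require Import all_boot all_order all_algebra.
From mathcomp Require Import all_classical all_reals all_analysis.
From mathcomp Require Import Rstruct Rstruct_topology.
From mathcomp Require Import ring lra.
Import Order.TTheory GRing.Theory Num.Theory.
Local Open Scope classical_set_scope.
Local Open Scope ring_scope.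

Definition tm (x : R) (k : nat) : R := x / (k%:R * (x + k%:R)).
Definition S (x : R) (n : nat) : R := \sum_(1 <= k < n) tm x k.

Lemma tm_ge0 x k : 0 <= x -> 0 <= tm x k.
Proof.
move=> x0; rewrite /tm; apply: mulr_ge0 => //; rewrite invr_ge0.
by apply: mulr_ge0 => //; apply: addr_ge0.
Qed.

Lemma tm_bound x (m : R) : 0 <= x -> 1 <= m ->
  x / (m * (x + m)) <= 2 * x / m - 2 * x / (m + 1).
Proof.
move=> x0 m1.
have E : 2 * x / m - 2 * x / (m + 1) = 2 * x / (m * (m + 1)).
  by field; apply/andP; split; apply/negP => /eqP; lra.
rewrite E ler_pdivrMr; last by apply: mulr_gt0; lra.
rewrite mulrAC ler_pdivlMr; last by apply: mulr_gt0; lra.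
have h : 0 <= x * m * (2 * x + m - 1).
  by apply: mulr_ge0; [apply: mulr_ge0; lra | lra].
nra.
Qed.

Lemma S_bound x n : 0 <= x -> S x n.+1 <= 2 * x - 2 * x / n.+1%:R.
Proof.
move=> x0; elim: n => [|n IH].
  by rewrite /S big_geq // divr1 subrr.
rewrite /S big_nat_recr //= -/(S x n.+1).
have := tm_bound x n.+1%:R x0.
have h1 : (1 : R) <= n.+1%:R by rewrite ler1n.
move=> /(_ h1) => h. rewrite /tm.
have -> : (n.+2%:R : R) = n.+1%:R + 1 by rewrite -natr1.
by apply: le_trans (lerD IH h) _; rewrite addrA subrK.
Qed.

Lemma cvgS (x : R) : 0 <= x -> cvgn (S x).
Proof.
move=> x0; apply: nondecreasing_is_cvgn.
  move=> n m nm; rewrite /S.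
  case: n nm => [|n] nm.
    rewrite big_geq //. apply: sumr_ge0 => k _; exact: tm_ge0.
  rewrite [X in _ <= X](@big_cat_nat _ _ _ n.+1) //= lerDl.
  by apply: sumr_ge0 => k _; exact: tm_ge0.
exists (2 * x) => _ [n _ <-].
case: n => [|n]; first by rewrite /S big_geq //; lra.
apply: le_trans (S_bound x n x0) _.
have : 0 <= 2 * x / n.+1%:R by apply: divr_ge0 => //; lra.
by rewrite gerBl.
Qed.

Lemma genHE x : genH x = limn (S x).
Proof. by []. Qed.

Lemma tm_key_r (a b m : R) : 0 <= a -> 0 <= b -> a + b <= 1 -> 1 <= m ->
  a / (m * (a + m)) + 4 * (b / (m * (b + m))) <= 4 * (1 / (m * (1 + m))).
Proof.
move=> a0 b0 ab m1.
have E : 4 * (1 / (m * (1 + m))) - 4 * (b / (m * (b + m)))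
    = 4 * (1 - b) / ((m + 1) * (b + m)).
  by field; do ! (apply/andP; split); apply/negP => /eqP; lra.
suff h : a / (m * (a + m)) <= 4 * (1 - b) / ((m + 1) * (b + m)).
  by move: h; rewrite -E lerBrDr.
rewrite ler_pdivrMr; last by apply: mulr_gt0; lra.
rewrite mulrAC ler_pdivlMr; last by apply: mulr_gt0; lra.
have h1 : 0 <= ((1 - b) - a) * (m + 1) * (b + m).
  by apply: mulr_ge0; [apply: mulr_ge0|]; lra.
have h2 : 0 <= (1 - b) * (m + 1) * (1 - b).
  by apply: mulr_ge0; [apply: mulr_ge0|]; lra.
have h3 : 0 <= (1 - b) * (m - 1) * (3 * m + 1).
  by apply: mulr_ge0; [apply: mulr_ge0|]; lra.
have h4 : 0 <= (1 - b) * m * a.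
  by apply: mulr_ge0; [apply: mulr_ge0|]; lra.
nra.
Qed.

Lemma tm_key (a b : R) k : 0 <= a -> 0 <= b -> a + b <= 1 ->
  tm a k + tm b k *+ 4 <= tm 1 k *+ 4.
Proof.
move=> a0 b0 ab; case: k => [|k].
  by rewrite /tm !mul0r !invr0 !mulr0 mul0rn addr0.
rewrite -[tm b _ *+ 4]mulr_natl -[tm 1 _ *+ 4]mulr_natl; apply: tm_key_r => //.
by rewrite ler1n.
Qed.

Lemma limD_nat (f g : nat -> R) : cvgn f -> cvgn g ->
  limn f + limn g = limn (fun n => f n + g n).
Proof.
move=> cf cg; symmetry; apply: cvg_lim; first exact: Rhausdorff.
exact (@cvgD R R^o nat _ _ f g _ _ cf cg).
Qed.

Lemma limMn_nat (f : nat -> R) k : cvgn f -> limn f *+ k = limn (fun n => f n *+ k).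
Proof.
move=> cf; symmetry; apply: cvg_lim; first exact: Rhausdorff.
exact (@cvgMn R R^o nat _ _ f k _ cf).
Qed.

Lemma cvgD_nat (f g : nat -> R) : cvgn f -> cvgn g -> cvgn (fun n => f n + g n).
Proof.
move=> cf cg; apply: cvgP; exact (@cvgD R R^o nat _ _ f g _ _ cf cg).
Qed.

Lemma cvgMn_nat (f : nat -> R) k : cvgn f -> cvgn (fun n => f n *+ k).
Proof.
move=> cf; apply: cvgP; exact (@cvgMn R R^o nat _ _ f k _ cf).
Qed.

Lemma genH_key (a b : R) : 0 <= a -> 0 <= b -> a + b <= 1 ->
  genH a + genH b *+ 4 <= genH 1 *+ 4.
Proof.
move=> a0 b0 ab; rewrite !genHE.
have ca := cvgS a a0; have cb := cvgS b b0.
have c1 : cvgn (S 1) by exact: (cvgS 1 ler01).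
rewrite (limMn_nat _ 4 cb) (limMn_nat _ 4 c1) (limD_nat _ _ ca (cvgMn_nat _ 4 cb)).
apply: ler_lim.
- exact: (cvgD_nat _ _ ca (cvgMn_nat _ 4 cb)).
- exact: (cvgMn_nat _ 4 c1).
apply: nearW => n.
rewrite /S -!sumrMnl -big_split /=.
by apply: ler_sum => k _; apply: tm_key.
Qed.

Lemma genH0 : genH 0 = 0.
Proof.
rewrite genHE.
have -> : S 0 = fun _ => 0.
  by apply: funext => n; rewrite /S big1 // => k _; rewrite /tm mul0r.
apply: cvg_lim; [exact: Rhausdorff | exact: cvg_cst].
Qed.

Notation mes X := (measurable (X : set (measurableTypeR R))).

Lemma closed_itvE (a b : R) : closed_itv (a, b) = `[a, b]%classic.
Proof. by apply/seteqP; split => x /=; rewrite in_itv /=. Qed.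

Lemma len_itv (a b : R) : a <= b -> len (closed_itv (a, b)) = b - a.
Proof.
move=> ab; rewrite /len closed_itvE lebesgue_measure_itv /=.
case: ifP => //; rewrite lte_fin => ba /=.
have -> : a = b by apply/eqP; rewrite eq_le ab /= leNgt ba.
by rewrite subrr.
Qed.

Lemma meas_itv (a b : R) : mes (closed_itv (a, b)).
Proof. by rewrite closed_itvE; exact: measurable_itv. Qed.

Lemma meas_seq (s : seq (R * R)) :
  mes [set x | exists2 p, p \in s & closed_itv p x].
Proof.
elim: s => [|p s IH].
  have -> : [set x | exists2 p, p \in [::] & closed_itv p x] = set0.
    by apply/seteqP; split => x //= [].
  exact: measurable0.
have -> : [set x | exists2 q, q \in p :: s & closed_itv q x] =
    closed_itv p `|` [set x | exists2 q, q \in s & closed_itv q x].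
  apply/seteqP; split => x /=.
    move=> [q]; rewrite in_cons => /orP [/eqP -> h|qs h]; [by left|right].
    by exists q.
  move=> [h|[q qs h]]; first by exists p => //; rewrite in_cons eqxx.
  by exists q => //; rewrite in_cons qs orbT.
apply: measurableU => //; case: p => a b; exact: meas_itv.
Qed.

Lemma piece_meas c X : is_piece c X -> mes X.
Proof. by move=> [s [_ [_ ->]]]; exact: meas_seq. Qed.

Lemma piece_sub c X : is_piece c X -> X `<=` closed_itv (0, c).
Proof.
move=> [s [h [_ ->]]] x [p /h [h1 [h2 h3]]] /= /andP [h4 h5].
apply/andP; split; [exact: le_trans h4|exact: le_trans h5 _].
Qed.

Lemma len_fin c X : 0 <= c -> mes X -> X `<=` closed_itv (0, c) ->
  (len X)%:E = lebesgue_measure X /\ 0 <= len X.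
Proof.
move=> c0 mX sX.
have fin : lebesgue_measure X \is a fin_num.
  rewrite ge0_fin_numE ?measure_ge0 //.
  apply: (@le_lt_trans _ _ (lebesgue_measure (closed_itv (0, c)))).
    by apply: le_measure => //; rewrite inE //; exact: meas_itv.
  by rewrite closed_itvE lebesgue_measure_itv /=; case: ifP => _; rewrite ?ltry.
by split; [rewrite /len fineK | apply: fine_ge0; apply: measure_ge0].
Qed.

Lemma add_le (c : R) (X I J : set R) : 0 <= c -> mes X -> X `<=` closed_itv (0, c) ->
  mes I -> mes J -> I `&` J = set0 ->
  len (I `&` X) + len (J `&` X) <= len X.
Proof.
move=> c0 mX sX mI mJ IJ.
have [eX _] := @len_fin c X c0 mX sX.
have [eI _] := @len_fin c _ c0 (measurableI _ _ mI mX) (subset_trans (@subIsetr _ I X) sX).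
have [eJ _] := @len_fin c _ c0 (measurableI _ _ mJ mX) (subset_trans (@subIsetr _ J X) sX).
rewrite -lee_fin EFinD eI eJ eX -measureU //; last first.
  by apply/seteqP; split => x // [[ix _] [jx _]]; rewrite -IJ.
  exact: measurableI.
  exact: measurableI.
apply: le_measure; rewrite ?inE //.
- by apply: measurableU; exact: measurableI.
- by move=> x [[_ ?]|[_ ?]].
Qed.

Lemma itv_piece (c a b : R) : 0 <= a -> a <= b -> b <= c -> is_piece c (closed_itv (a, b)).
Proof.
move=> a0 ab bc; exists [:: (a, b)]; split; [|split].
- by move=> p; rewrite mem_seq1 => /eqP ->.
- by move=> [|i] [|j] //= /andP [].
- apply/seteqP; split => x /=.
    by move=> h; exists (a, b) => //; rewrite mem_seq1.
  by move=> [p]; rewrite mem_seq1 => /eqP ->.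
Qed.

Definition I0 : set R := closed_itv (0, 1/5).
Definition I1 : set R := closed_itv (1, 2).
Definition Rp (i : 'I_5) : set R := if i == ord0 then I0 else I1.

Lemma I01 : I0 `&` I1 = set0.
Proof.
apply/seteqP; split => x //; rewrite /I0 /I1 /closed_itv /= => -[/andP [h1 h2] /andP [h3 h4]]; lra.
Qed.

Lemma sumE (X : set R) :
  \sum_(i < 5) genH (util Rp i X) = genH (len (I0 `&` X)) + genH (len (I1 `&` X)) *+ 4.
Proof.
rewrite big_ord_recl (eq_bigr (fun _ => genH (len (I1 `&` X)))); last first.
  by move=> i _; rewrite /util /Rp eq_sym (negbTE (neq_lift _ _)).
by rewrite sumr_const card_ord.
Qed.

Theorem mainTheorem12 :
  exists (n : nat) (c alpha : R) (Rp : 'I_n -> set R) (A : set R),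
    cake_instance c alpha Rp /\ gen_PAV_selects c alpha Rp A /\
    ~ cake_EJR alpha Rp A.
Proof.
have lI1 : len I1 = 1 by rewrite /I1 len_itv; lra.
have lI0 : len I0 = 1/5 by rewrite /I0 len_itv; lra.
have l0 : len set0 = 0 by rewrite /len measure0.
have pI0 : is_piece 2 I0 by apply: itv_piece; lra.
have pI1 : is_piece 2 I1 by apply: itv_piece; lra.
exists 5, 2, 1, Rp, I1.
split; [|split].
- split => //; split; [lra|split; [lra|]].
  by move=> i; rewrite /Rp; case: ifP.
- split; first by split => //; rewrite lI1.
  move=> B [pB lB].
  rewrite !sumE I01 setIid l0 lI1 genH0 add0r.
  have sB := piece_sub _ _ pB; have mB := piece_meas _ _ pB.
  have mI0 : mes I0 by exact: meas_itv.
  have mI1 : mes I1 by exact: meas_itv.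
  have [_ a0] := @len_fin 2 _ ltac:(lra) (measurableI _ _ mI0 mB) (subset_trans (@subIsetr _ I0 B) sB).
  have [_ b0] := @len_fin 2 _ ltac:(lra) (measurableI _ _ mI1 mB) (subset_trans (@subIsetr _ I1 B) sB).
  apply: genH_key => //.
  apply: le_trans lB.
  apply: (@add_le 2) => //; exact: I01.
- move=> H.
  have gi : group_inter Rp ([set ord0]%SET : {set 'I_5}) = I0.
    apply/seteqP; split => x /=.
      by move=> /(_ ord0); rewrite !inE eqxx /Rp eqxx; apply.
    by move=> h i; rewrite !inE => /eqP ->; rewrite /Rp eqxx.
  have [] := H (1/5) ([set ord0]%SET : {set 'I_5}); first lra.
    split; last by rewrite gi lI0.
    by rewrite cards1; lra.
  move=> j; rewrite !inE => /eqP ->.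
  by rewrite /util /Rp eqxx I01 l0; lra.
Qed.
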